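(* Let $\mu$ be a Borel measure on $\mathbb R$ with $\mu(\mathbb R)=1$, and let $f$ be Lipschitz continuous with $f(0)=f(\alpha)=f(1)=0$, $f<0$ on $(0,\alpha)$, $f>0$ on $(\alpha,1)$ for some $\alpha\in(0,1)$. Let $\hat f$ be a Lipschitz continuous function on $\mathbb R$ with $\hat f>0$ on $(-\infty,0)$, $\hat f=f$ on $[0,1]$, $\hat f<0$ on $(1,+\infty)$. Let $\rho\in C^1(\mathbb R)$ satisfy $\rho=0$ on $(-\infty,0]$, $\rho=1$ on $[1,+\infty)$ and $\rho'>0$ on $(0,1)$. Then for every sufficiently small constant $\varepsilon>0$, the function $\underline u(t,x):=\rho(\varepsilon x-\frac{t}{\varepsilon})-\frac{1-\alpha}{4}$ is a sub-solution and the function $\overline u(t,x):=\rho(\varepsilon x+\frac{t}{\varepsilon}+1)+\frac{\alpha}{4}$ is a super-solution of \[u_t=\mu*u-u+\hat f(u).\]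
   Context: $(\mu*u)(x)=\int_{y\in\mathbb R}u(x-y)\,d\mu(y)$. A sub-solution (resp. super-solution) is a function $u(t,x)$ satisfying $u_t\le\mu*u-u+\hat f(u)$ (resp. $u_t\ge\mu*u-u+\hat f(u)$) for all $t,x\in\mathbb R$. *)

(* Defs.v *)
From HB Require Import structures.
From mathcomp Require Import all_boot all_order all_algebra.
From mathcomp Require Import all_classical all_reals all_analysis.
Set Implicit Arguments. Unset Strict Implicit. Unset Printing Implicit Defensive.
Import Order.TTheory GRing.Theory Num.Theory.
Import numFieldNormedType.Exports.
Local Open Scope classical_set_scope.
Local Open Scope ring_scope.

Definition lipschitz_on_set (R : realType) (A : set R) (g : R -> R) : Prop :=
  exists k : R, forall x y, A x -> A y -> `|g x - g y| <= k * `|x - y|.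

Definition conv (R : realType) (mu : {measure set R -> \bar R}) (v : R -> R) (x : R) : R :=
  Rintegral mu setT (fun y => v (x - y)).

Definition nl_rhs (R : realType) (mu : {measure set R -> \bar R}) (fh : R -> R)
  (u : R -> R -> R) (t x : R) : R :=
  conv mu (u t) x - u t x + fh (u t x).

Definition subsolution (R : realType) (mu : {measure set R -> \bar R}) (fh : R -> R)
  (u : R -> R -> R) : Prop :=
  forall t x, derivable (fun s => u s x) t 1 /\
    derive1 (fun s => u s x) t <= nl_rhs mu fh u t x.

Definition supersolution (R : realType) (mu : {measure set R -> \bar R}) (fh : R -> R)
  (u : R -> R -> R) : Prop :=
  forall t x, derivable (fun s => u s x) t 1 /\
    derive1 (fun s => u s x) t >= nl_rhs mu fh u t x.

(* Main.v *)
Require Import Defs.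
From HB Require Import structures.
From mathcomp Require Import all_boot all_order all_algebra.
From mathcomp Require Import all_classical all_reals all_analysis.
Import Order.TTheory GRing.Theory Num.Theory.
Import numFieldNormedType.Exports.
Local Open Scope classical_set_scope.
Local Open Scope ring_scope.
Set Implicit Arguments.
From mathcomp Require Import lra.

Lemma der_cont (R : realType) (rho : R -> R) :
  (forall x, derivable rho x 1) -> continuous rho.
Proof.
move=> h x; apply: differentiable_continuous; exact/derivable1_diffP.
Qed.

Lemma der_zero_lt (R : realType) (rho : R -> R) (z c : R) :
  (forall x, x <= 0 -> rho x = c) -> z < 0 -> derive1 rho z = 0.
Proof.
move=> h hz; rewrite derive1E.
rewrite (near_eq_derive (g := cst c)); last first.
  near=> y; apply: h.
  near: y; exact: lt_le_nbhsl.
by rewrite derive_val.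
Unshelve. all: by end_near.
Qed.

Lemma der_zero_gt (R : realType) (rho : R -> R) (z c : R) :
  (forall x, 1 <= x -> rho x = c) -> 1 < z -> derive1 rho z = 0.
Proof.
move=> h hz; rewrite derive1E.
rewrite (near_eq_derive (g := cst c)); last first.
  near=> y; apply: h.
  near: y; exact: lt_le_nbhsr.
by rewrite derive_val.
Unshelve. all: by end_near.
Qed.

Lemma cont_ge0_01 (R : realType) (g : R -> R) :
  continuous g -> (forall x, 0 < x < 1 -> 0 < g x) -> 0 <= g 0 /\ 0 <= g 1.
Proof.
move=> gc gp; split.
- have H : g z @[z --> 0^'+] --> g 0 by apply: cvg_at_right_filter; exact: gc.
  rewrite -(cvg_lim _ H) //; apply: limr_ge; first by apply/cvg_ex; exists (g 0).
  near=> z; apply/ltW/gp; apply/andP; split.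
    by near: z; exact: nbhs_right_gt.
  by near: z; apply: nbhs_right_lt.
- have H : g z @[z --> 1^'-] --> g 1 by apply: cvg_at_left_filter; exact: gc.
  rewrite -(cvg_lim _ H) //; apply: limr_ge; first by apply/cvg_ex; exists (g 1).
  near=> z; apply/ltW/gp; apply/andP; split.
    by near: z; apply: nbhs_left_gt.
  by near: z; exact: nbhs_left_lt.
Unshelve. all: by end_near.
Qed.

Lemma rho_der_ge0 (R : realType) (rho : R -> R) :
  continuous (derive1 rho) ->
  (forall x, x <= 0 -> rho x = 0) ->
  (forall x, 1 <= x -> rho x = 1) ->
  (forall x, 0 < x < 1 -> 0 < derive1 rho x) ->
  forall z, 0 <= derive1 rho z.
Proof.
move=> dc h0 h1 hp z.
have [A B] := cont_ge0_01 dc hp.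
have [z0|z0] := ltP z 0; first by rewrite (@der_zero_lt _ rho _ _ h0 z0).
have [z1|z1] := ltP 1 z; first by rewrite (@der_zero_gt _ rho _ _ h1 z1).
move: z0; rewrite le_eqVlt => /orP[/eqP<-//|z0].
move: z1; rewrite le_eqVlt => /orP[/eqP->//|z1].
by apply/ltW/hp; rewrite z0 z1.
Qed.

Lemma rho_lip (R : realType) (rho : R -> R) :
  (forall x, derivable rho x 1) ->
  continuous (derive1 rho) ->
  (forall x, x <= 0 -> rho x = 0) ->
  (forall x, 1 <= x -> rho x = 1) ->
  exists L, 0 <= L /\ forall a b, `|rho a - rho b| <= L * `|a - b|.
Proof.
move=> hd dc h0 h1.
have [c _ Hc] : exists2 c : R, c \in `[0, 1] &
    forall t, t \in `[(0:R), 1] -> `|derive1 rho t| <= `|derive1 rho c|.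
  apply: EVT_max => //; apply: continuous_subspaceT => x.
  exact: (continuous_comp (dc x) (@norm_continuous _ R _)).
have HL : forall t, `|derive1 rho t| <= `|derive1 rho c|.
  move=> t.
  have [t0|t0] := ltP t 0; first by rewrite (@der_zero_lt _ rho _ _ h0 t0) normr0.
  have [t1|t1] := ltP 1 t; first by rewrite (@der_zero_gt _ rho _ _ h1 t1) normr0.
  by apply: Hc; rewrite in_itv /= t0 t1.
exists `|derive1 rho c|; split => // a b.
wlog ab : a b / a <= b.
  move=> W; have [/W//|/ltW ba] := leP a b.
  by rewrite distrC (distrC a); apply: W.
move: ab; rewrite le_eqVlt => /orP[/eqP->|ab]; first by rewrite !subrr normr0 mulr0.
have hm := @MVT _ rho (derive1 rho) a b ab
  (fun x _ => eq_ind_r (fun u => is_derive x 1 rho u) (derivableP (hd x)) (derive1E rho x))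
  (@continuous_subspaceT _ _ _ _ (der_cont hd)).
rewrite distrC (distrC a); case: hm => d _ ->.
by rewrite normrM ler_wpM2r.
Qed.

Lemma rho_bnd (R : realType) (rho : R -> R) :
  (forall x, derivable rho x 1) ->
  (forall x, x <= 0 -> rho x = 0) ->
  (forall x, 1 <= x -> rho x = 1) ->
  exists B, 0 <= B /\ forall a, `|rho a| <= B.
Proof.
move=> hd h0 h1.
have [c _ Hc] : exists2 c : R, c \in `[0, 1] &
    forall t, t \in `[(0:R), 1] -> `|rho t| <= `|rho c|.
  apply: EVT_max => //; apply: continuous_subspaceT => x.
  exact: (continuous_comp (der_cont hd x) (@norm_continuous _ R _)).
exists `|rho c|; split => // t.
have [t0|t0] := ltP t 0; first by rewrite (h0 _ (ltW t0)) normr0.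
have [t1|t1] := ltP 1 t.
  rewrite (h1 _ (ltW t1)); apply: le_trans (Hc 1 _); first by rewrite h1.
  by rewrite in_itv /= ler01 lexx.
by apply: Hc; rewrite in_itv /= t0 t1.
Qed.
Lemma cont_aff (R : realType) (rho : R -> R) (z eps : R) : continuous rho ->
  continuous (fun y => rho (z - eps * y)).
Proof.
move=> rc y; apply: continuous_comp; last exact: rc.
apply: cvgB; first exact: cvg_cst.
by apply: cvgMr; exact: cvg_id.
Qed.

Lemma mu_fin (R : realType) (mu : {measure set R -> \bar R}) (A : set R) :
  mu setT = 1%E -> measurable A -> mu A \is a fin_num.
Proof.
move=> h1 mA; rewrite ge0_fin_numE //.
have : (mu A <= 1)%E by rewrite -h1; apply: le_measure => //; rewrite ?inE.
move=> /le_lt_trans; apply; exact: (@ltry R 1).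
Qed.

Lemma integ_bnd (R : realType) (mu : {measure set R -> \bar R}) (A : set R)
  (g : R -> R) (M : R) :
  mu setT = 1%E -> measurable A -> continuous g -> (forall y, `|g y| <= M) ->
  mu.-integrable A (EFin \o g).
Proof.
move=> h1 mA gc gM; apply: measurable_bounded_integrable => //.
- by rewrite -ge0_fin_numE //; exact: mu_fin.
- apply: measurable_funS (measurable_realfun.continuous_measurable_fun gc) => //.
- rewrite /bounded_near; near=> K => x _; apply: le_trans (gM x) _.
  near: K; apply: nbhs_pinfty_ge; exact: num_real.
Unshelve. all: by end_near.
Qed.

Definition KK (R : realType) (n : nat) : set R := `[(- n%:R)%R, n%:R]%classic.

Lemma tail (R : realType) (mu : {measure set R -> \bar R}) (d : R) :
  mu setT = 1%E -> 0 < d -> exists n : nat, fine (mu (~` KK R n)) <= d.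
Proof.
move=> h1 d0.
have mK : forall n, measurable (KK R n) by move=> n; exact: measurable_itv.
have cv := @nondecreasing_cvg_mu _ R R mu (KK R) mK.
have UE : \bigcup_n KK R n = setT.
  apply/seteqP; split => // x _.
  exists (Num.Def.archi_bound `|x|) => //.
  have := archi_boundP (normr_ge0 x) => /ltW.
  by rewrite /KK /= in_itv /= -ler_norml.
rewrite UE h1 in cv.
have /cv {}cv : {homo KK R : n m / (n <= m)%N >-> (n <= m)%O}.
  move=> n m nm; apply/subsetPset => x; rewrite /KK /= !in_itv /= => /andP[a b].
  have nm' : (n%:R <= m%:R :> R) by rewrite ler_nat.
  rewrite (le_trans _ a) ?(le_trans b) // lerN2 //.
have /cv {}cv : measurable (@setT R) by [].
move/fine_cvgP: cv => [_ cv].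
have := @cvgr_gt _ _ _ _ _ 1 cv (1 - d).
rewrite ltrBlDr ltrDl => /(_ _ d0) [N _ HN].
exists N; have := HN N (leqnn N) => /=.
have := measureU mu (mK N) (measurableC (mK N)) (setICr (KK R N)).
have e1 : mu (KK R N `|` ~` KK R N) = 1%E by rewrite setUCr; exact: h1.
move=> e.
have e2 : (mu (KK R N) + mu (~` KK R N))%E = 1%E.
  by etransitivity; [symmetry; exact: e | exact: e1].
move: e2 => /(congr1 fine).
rewrite fineD ?mu_fin //=; last exact: measurableC.
move=> e3 h; lra.
Qed.

Lemma fine_mu01 (R : realType) (mu : {measure set R -> \bar R}) (A : set R) :
  mu setT = 1%E -> measurable A -> 0 <= fine (mu A) <= 1.
Proof.
move=> h1 mA; rewrite fine_ge0 //=.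
have : (mu A <= 1)%E by rewrite -h1; apply: le_measure => //; rewrite ?inE.
move=> h; have := fine_le (@mu_fin _ mu A h1 mA) _ h; exact.
Qed.

Lemma conv_est (R : realType) (mu : {measure set R -> \bar R}) (rho : R -> R)
  (L B : R) (n : nat) (eps z c : R) :
  mu setT = 1%E -> continuous rho ->
  (forall a b, `|rho a - rho b| <= L * `|a - b|) -> (forall a, `|rho a| <= B) ->
  0 <= L -> 0 <= eps ->
  `|Rintegral mu setT (fun y => rho (z - eps * y) + c) - (rho z + c)|
    <= L * eps * n%:R + 2 * B * fine (mu (~` KK R n)).
Proof.
move=> h1 rc lip bnd L0 e0.
set h := fun y => rho (z - eps * y).
have hc : continuous h by exact: cont_aff.
have ih : forall A, measurable A -> mu.-integrable A (EFin \o h).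
  by move=> A mA; apply: (@integ_bnd _ mu A _ (B)) => // y; exact: bnd.
have icst : forall (k : R) A, measurable A -> mu.-integrable A (EFin \o (cst k)).
  move=> k A mA; apply: (@integ_bnd _ mu A _ (`|k|)) => //; exact: cst_continuous.
have gc : continuous (fun y => `|h y - rho z|).
  move=> y; apply: cvg_norm.
  by apply: cvgB; [exact: hc | exact: cvg_cst].
have ig : forall A, measurable A -> mu.-integrable A (EFin \o (fun y => `|h y - rho z|)).
  move=> A mA; apply: (@integ_bnd _ mu A _ (2 * B)) => // y.
  rewrite normr_id; apply: le_trans (ler_normB _ _) _; rewrite mulr2n mulrDl mul1r.
  by apply: lerD; apply: bnd.
have -> : Rintegral mu setT (fun y => h y + c) - (rho z + c) =
          Rintegral mu setT (fun y => h y - rho z).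
  rewrite (RintegralD (f2 := cst c)) //; try exact: ih; try exact: icst.
  rewrite (RintegralB (f2 := cst (rho z))) //; try exact: ih; try exact: icst.
  rewrite !Rintegral_cst // h1 /=; lra.
have ig2 : forall A, measurable A -> mu.-integrable A (EFin \o (fun y => h y - rho z)).
  move=> A mA; apply: (@integ_bnd _ mu A _ (2 * B)) => //.
    by move=> y; apply: cvgB; [exact: hc | exact: cvg_cst].
  move=> y; apply: le_trans (ler_normB _ _) _; rewrite mulr2n mulrDl mul1r.
  by apply: lerD; apply: bnd.
have mK : measurable (KK R n) by exact: measurable_itv.
apply: le_trans (le_normr_Rintegral _ _) _ => //; first exact: ig2.
rewrite -(setUCr (KK R n)) Rintegral_setU //; first last.
- by rewrite /disj_set setICr.
- by rewrite setUCr; exact: ig.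
- exact: measurableC.
have [f0 f1] := andP (@fine_mu01 _ mu _ h1 mK).
have lne : 0 <= L * eps * n%:R by rewrite !mulr_ge0.
apply: lerD.
- apply: le_trans.
    apply: (le_Rintegral (f2 := cst (L * eps * n%:R))) => //; first exact: ig.
      exact: icst.
    move=> x; rewrite /KK /= in_itv /= -ler_norml => xn.
    rewrite /h; apply: le_trans (lip _ _) _.
    rewrite addrAC subrr add0r normrN normrM (ger0_norm e0) mulrA.
    by apply: ler_wpM2l => //; rewrite mulr_ge0.
  by rewrite Rintegral_cst // ler_piMr.
- apply: le_trans.
    apply: (le_Rintegral (f2 := cst (2 * B)) (measurableC mK) (ig _ (measurableC mK))
      (icst _ _ (measurableC mK))).
    move=> x _ /=.
    apply: le_trans (ler_normB _ _) _; rewrite mulr2n mulrDl mul1r.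
    by apply: lerD; apply: bnd.
  by rewrite Rintegral_cst //; exact: measurableC.
Qed.

Lemma key (R : realType) (rho phi : R -> R) :
  (forall x, derivable rho x 1) -> continuous (derive1 rho) ->
  (forall x, x <= 0 -> rho x = 0) ->
  (forall x, 1 <= x -> rho x = 1) ->
  (forall x, 0 < x < 1 -> 0 < derive1 rho x) ->
  continuous phi -> 0 < phi (rho 0) -> 0 < phi (rho 1) ->
  exists m, 0 < m /\ exists e1, 0 < e1 /\
    forall eps, 0 < eps -> eps <= e1 -> forall z, m <= derive1 rho z / eps + phi (rho z).
Proof.
move=> hd dc h0 h1 hp pc p0 p1.
have rc := der_cont hd.
have prc : continuous (phi \o rho) by move=> x; apply: continuous_comp; [exact: rc|exact: pc].
have [c c01 Hc] : exists2 c : R, c \in `[0, 1] &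
    forall t, t \in `[(0:R), 1] -> (derive1 rho \max (phi \o rho)) c <= (derive1 rho \max (phi \o rho)) t.
  apply: EVT_min => //; apply: continuous_subspaceT.
  exact: max_fun_continuous.
have [c2 _ Hc2] : exists2 c : R, c \in `[0, 1] &
    forall t, t \in `[(0:R), 1] -> (phi \o rho) c <= (phi \o rho) t.
  by apply: EVT_min => //; apply: continuous_subspaceT.
set C := `|phi (rho c2)|.
have C0 : 0 <= C by exact: normr_ge0.
set m := Num.min ((derive1 rho \max (phi \o rho)) c) (Num.min (phi (rho 0)) (phi (rho 1))).
have m0 : 0 < m.
  rewrite !lt_min p0 p1 !andbT /= lt_max.
  move: c01; rewrite in_itv /= => /andP[]; rewrite le_eqVlt => /orP[/eqP<-|c0].
    by rewrite p0 orbT.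
  rewrite le_eqVlt => /orP[/eqP->|c1]; first by rewrite p1 orbT.
  by rewrite hp // c0 c1.
have mle : m <= phi (rho 0) /\ m <= phi (rho 1).
  by split; rewrite /m !ge_min lexx !orbT.
have Hz : forall z, (m <= derive1 rho z \/ m <= phi (rho z)) /\ - C <= phi (rho z).
  move=> z.
  have [z0|z0] := ltP z 0.
    have -> : rho z = rho 0 by rewrite !h0 // ltW.
    split; first by right; exact: mle.1.
    by apply: le_trans (ltW p0); rewrite oppr_le0.
  have [z1|z1] := ltP 1 z.
    have -> : rho z = rho 1 by rewrite !h1 // ltW.
    split; first by right; exact: mle.2.
    by apply: le_trans (ltW p1); rewrite oppr_le0.
  have zi : z \in `[(0:R), 1] by rewrite in_itv /= z0 z1.
  split.
    have : m <= (derive1 rho \max (phi \o rho)) z.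
      by apply: le_trans (Hc _ zi); rewrite ge_min lexx.
    by rewrite /= le_max => /orP[]; [left|right].
  apply: le_trans (Hc2 _ zi); rewrite /C lerNl -normrN; exact: ler_norm.
exists m; split => //; exists (m / (C + m)); split.
  by rewrite divr_gt0 // ltr_wpDl.
move=> eps e0 e1 z.
have d0 := rho_der_ge0 dc h0 h1 hp z.
have [[A|A] B] := Hz z.
- have : C + m <= derive1 rho z / eps.
    rewrite ler_pdivlMr // (le_trans _ A) //.
    by rewrite mulrC -ler_pdivlMr // ltr_wpDl.
  lra.
- have : 0 <= derive1 rho z / eps by rewrite divr_ge0 // ltW.
  lra.
Qed.
Lemma dchain (R : realType) (rho F : R -> R) (c k a t : R) :
  (forall x, derivable rho x 1) -> (forall s, F s = rho (c + k * s) + a) ->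
  derivable F t 1 /\ derive1 F t = k * derive1 rho (c + k * t).
Proof.
move=> hd hF.
have -> : F = (rho \o (cst c + k \*: id)) + cst a.
  by apply/funext => s; rewrite hF.
have Hg : is_derive t 1 (cst c + k \*: id) (0 + k *: 1).
  by apply: is_deriveD.
have Hr : is_derive ((cst c + k \*: id) t) 1 rho (derive1 rho ((cst c + k \*: id) t)).
  rewrite derive1E; exact: derivableP.
have H := is_deriveD (is_derive1_comp Hr Hg) (is_derive_cst a t 1).
split; first exact: (@ex_derive _ _ _ _ _ _ _ H).
rewrite derive1E (@derive_val _ _ _ _ _ _ _ H) /=.
rewrite add0r addr0 mulrC -[k%:A]/(k * 1) mulr1.
by [].
Qed.

Lemma lip_cont (R : realType) (g : R -> R) (k : R) :
  (forall x y, `|g x - g y| <= k * `|x - y|) -> continuous g.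
Proof.
move=> hk x; apply/cvgrPdist_le => e e0.
have k1 : 0 < `|k| + 1 by rewrite ltr_wpDl.
apply/nbhs_ballP; exists (e / (`|k| + 1)); first by rewrite /= divr_gt0.
move=> y; rewrite /ball /= => xy.
apply: le_trans (hk x y) _.
apply: le_trans (ler_wpM2r (normr_ge0 _) (ler_norm k)) _.
apply: (@le_trans _ _ ((`|k| + 1) * `|x - y|)).
  by apply: ler_wpM2r => //; rewrite lerDl.
rewrite mulrC -ler_pdivlMr //; exact: ltW.
Qed.

Lemma cont_sh (R : realType) (g : R -> R) (c : R) :
  continuous g -> continuous (fun v => g (v + c)).
Proof.
move=> gc v; apply: (@continuous_comp _ _ _ (fun v => v + c) g); last exact: gc.
by apply: cvgD; [exact: cvg_id | exact: cvg_cst].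
Qed.

Lemma cont_shN (R : realType) (g : R -> R) (c : R) :
  continuous g -> continuous (fun v => - g (v + c)).
Proof.
move=> gc v; apply: cvgN; exact: cont_sh.
Qed.

Unset Implicit Arguments.

Theorem lemma12 (R : realType) (mu : {measure set R -> \bar R})
  (f fh rho : R -> R) (alpha : R) :
  mu setT = 1%E ->
  0 < alpha < 1 ->
  lipschitz_on_set `[0, 1] f ->
  f 0 = 0 -> f alpha = 0 -> f 1 = 0 ->
  (forall x, 0 < x < alpha -> f x < 0) ->
  (forall x, alpha < x < 1 -> 0 < f x) ->
  lipschitz_on_set setT fh ->
  (forall x, x < 0 -> 0 < fh x) ->
  (forall x, 0 <= x <= 1 -> fh x = f x) ->
  (forall x, 1 < x -> fh x < 0) ->
  (forall x, derivable rho x 1) -> continuous (derive1 rho) ->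
  (forall x, x <= 0 -> rho x = 0) ->
  (forall x, 1 <= x -> rho x = 1) ->
  (forall x, 0 < x < 1 -> 0 < derive1 rho x) ->
  exists eps0 : R, 0 < eps0 /\
    forall eps : R, 0 < eps -> eps < eps0 ->
      subsolution mu fh
        (fun t x => rho (eps * x - t / eps) - (1 - alpha) / 4) /\
      supersolution mu fh
        (fun t x => rho (eps * x + t / eps + 1) + alpha / 4).
Proof.
move=> h1 /andP[al0 al1] _ _ _ _ fneg fpos [kh fhlip] fhneg fheq fhpos hd dc r0 r1 rp.
have fhc : continuous fh := @lip_cont R fh kh (fun x y => fhlip x y I I).
set a := (1 - alpha) / 4.
set b := alpha / 4.
have rho0 : rho 0 = 0 by apply: r0.
have rho1 : rho 1 = 1 by apply: r1.
have p10 : 0 < fh (rho 0 + - a).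
  rewrite rho0 add0r; apply: fhneg; rewrite /a; lra.
have p11 : 0 < fh (rho 1 + - a).
  rewrite rho1 fheq; last by rewrite /a; apply/andP; split; lra.
  by apply: fpos; rewrite /a; apply/andP; split; lra.
have [m1 [m1p [e1 [e1p H1]]]] := @key R rho (fun v => fh (v + - a)) hd dc r0 r1 rp
  (cont_sh _ fhc) p10 p11.
have p20 : 0 < - fh (rho 0 + b).
  rewrite rho0 add0r fheq; last by rewrite /b; apply/andP; split; lra.
  by rewrite oppr_gt0; apply: fneg; rewrite /b; apply/andP; split; lra.
have p21 : 0 < - fh (rho 1 + b).
  rewrite rho1 oppr_gt0; apply: fhpos; rewrite /b; lra.
have [m2 [m2p [e2 [e2p H2]]]] := @key R rho (fun v => - fh (v + b)) hd dc r0 r1 rp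
  (cont_shN _ fhc) p20 p21.
have [L [L0 lip]] := rho_lip hd dc r0 r1.
have [B [B0 bnd]] := rho_bnd hd r0 r1.
set m := Num.min m1 m2.
have m0 : 0 < m by rewrite lt_min m1p m2p.
have mm1 : m <= m1 by rewrite ge_min lexx.
have mm2 : m <= m2 by rewrite ge_min lexx orbT.
set d := m / (4 * (B + 1)).
have B1 : 0 < 4 * (B + 1) by rewrite mulr_gt0 // ltr_wpDl.
have d0 : 0 < d by rewrite divr_gt0.
have [n Hn] := @tail R mu d h1 d0.
have dm : 4 * (B + 1) * d = m by rewrite /d mulrC divfK // gt_eqF.
have fK0 : 0 <= fine (mu (~` KK R n)).
  exact: fine_ge0.
have tailb : 2 * B * fine (mu (~` KK R n)) <= m / 2.
  have : B * fine (mu (~` KK R n)) <= B * d by apply: ler_wpM2l.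
  have : B * d <= (B + 1) * d by apply: ler_wpM2r; [exact: ltW | rewrite lerDl].
  lra.
have Ln : 0 < 2 * (L * n%:R + 1) by rewrite mulr_gt0 // ltr_wpDl // mulr_ge0.
exists (Num.min (Num.min e1 e2) (m / (2 * (L * n%:R + 1)))); split.
  by rewrite !lt_min e1p e2p divr_gt0.
move=> eps e0; rewrite !lt_min => /andP[/andP[ee1 ee2] ee3].
have est : forall z c, `|Rintegral mu setT (fun y => rho (z - eps * y) + c) - (rho z + c)| <= m.
  move=> z c; apply: le_trans (@conv_est R mu rho L B n eps z c h1 (der_cont hd) lip bnd L0 (ltW e0)) _.
  have : eps * (2 * (L * n%:R + 1)) < m by rewrite -ltr_pdivlMr.
  have : 0 <= eps * L * n%:R by rewrite !mulr_ge0 // ltW.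
  lra.
split.
- move=> t x /=.
  set z := eps * x + - eps^-1 * t.
  have [D1 D2] := @dchain R rho (fun s => rho (eps * x - s / eps) - a) (eps * x) (- eps^-1) (- a) t hd
    (fun s => congr1 (fun w => rho w - a) (etrans (congr1 (fun w => eps * x - w) (mulrC s eps^-1)) (congr1 (fun w => eps * x + w) (esym (mulNr _ _))))).
  split => //; rewrite D2 /nl_rhs /Defs.conv /=.
  have E1 : forall y, rho (eps * (x - y) - t / eps) - a = rho (z - eps * y) + - a.
    by move=> y; congr (rho _ - _); rewrite /z; lra.
  have E2 : rho (eps * x - t / eps) = rho z by congr rho; rewrite /z; lra.
  have -> : Rintegral mu setT (fun y => rho (eps * (x - y) - t / eps) - a) =
            Rintegral mu setT (fun y => rho (z - eps * y) + - a).
    by congr Rintegral; apply/funext => y; exact: E1.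
  rewrite E2.
  have := est z (- a); rewrite ler_norml => /andP[A _].
  have := H1 eps e0 (ltW ee1) z.
  lra.
- move=> t x /=.
  set z := eps * x + 1 + eps^-1 * t.
  have [D1 D2] := @dchain R rho (fun s => rho (eps * x + s / eps + 1) + b) (eps * x + 1) (eps^-1) b t hd
    (fun s => congr1 (fun w => rho w + b) (etrans (addrAC _ _ _) (congr1 (fun w => eps * x + 1 + w) (mulrC s eps^-1)))).
  split => //; rewrite D2 /nl_rhs /Defs.conv /=.
  have E1 : forall y, rho (eps * (x - y) + t / eps + 1) + b = rho (z - eps * y) + b.
    by move=> y; congr (rho _ + _); rewrite /z; lra.
  have E2 : rho (eps * x + t / eps + 1) = rho z by congr rho; rewrite /z; lra.
  have -> : Rintegral mu setT (fun y => rho (eps * (x - y) + t / eps + 1) + b) =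
            Rintegral mu setT (fun y => rho (z - eps * y) + b).
    by congr Rintegral; apply/funext => y; exact: E1.
  rewrite E2.
  have := est z b; rewrite ler_norml => /andP[_ A].
  have := H2 eps e0 (ltW ee2) z.
  lra.
Qed.
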